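(* Let $G$ be a finite triangle-free graph of order $n$. (i) If $\delta(G)\geq 1$, then $\beta_{s}(G)\leq n+6-2\sqrt{9+2n}$. (ii) If $\delta(G)\geq 2$, then $\beta_{D}(G)\leq n+4-2\sqrt{4+2n}$. Furthermore, the inequality in (i) holds with equality if and only if $G\in\Lambda$, and the inequality in (ii) holds with equality if and only if $G\in\Omega$.
   Context: All graphs are finite and simple. For a vertex $v$, $N(v)$ is its open neighborhood and $N[v]=N(v)\cup\{v\}$; $\delta(G)$ and $\Delta(G)$ denote minimum and maximum degree, and $G[S]$ is the subgraph induced by $S$. For $f:V(G)\to\mathbb{R}$ and $S\subseteq V(G)$, $f(S)=\sum_{v\in S}f(v)$. A signed bad function (SBF) of $G$ is a function $f:V(G)\to\{-1,1\}$ with $f(N[v])\leq 1$ for every $v\in V(G)$; the signed bad number is $\beta_s(G)=\max\{f(V(G)) : f \text{ is an SBF of } G\}$. A bad function (BF) of $G$ is a function $f:V(G)\to\{-1,1\}$ with $f(N(v))\leq 1$ for every $v\in V(G)$; the negative decision number is $\beta_D(G)=\max\{f(V(G)) : f \text{ is a BF of } G\}$. The corona $G_1\circ G_2$ is the graph formed from one copy of $G_1$ and $|V(G_1)|$ copies of $G_2$, where the $i$th vertex of $G_1$ is joined to every vertex of the $i$th copy of $G_2$. $\overline{K_m}$ denotes the edgeless graph on $m$ vertices. $\Lambda$ is the family of all graphs $G$ obtained, for some positive integer $p$, from $K_{p,p}\circ\overline{K_{p+2}}$ by adding some new edges (possibly none) whose endpoints both lie in the copies of $\overline{K_{p+2}}$,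 such that the resulting graph is triangle-free and $\Delta(G[V(G)\setminus V(K_{p,p})])\leq 1$. $\Omega$ is the family of all graphs $G$ obtained, for some positive integer $p$, from $K_{p,p}\circ\overline{K_{p+1}}$ by adding some new edges (possibly none) whose endpoints both lie in the copies of $\overline{K_{p+1}}$, such that the resulting graph is triangle-free and $\Delta(G[V(G)\setminus V(K_{p,p})])\leq 2$. *)

(* Defs.v *)
From HB Require Import structures.
From mathcomp Require Import all_boot all_order all_algebra.
Set Implicit Arguments. Unset Strict Implicit. Unset Printing Implicit Defensive.
Import Order.TTheory GRing.Theory Num.Theory.
Local Open Scope ring_scope.

Definition simple_graph (T : finType) (e : rel T) : Prop :=
  symmetric e /\ irreflexive e.

Definition triangle_free (T : finType) (e : rel T) : Prop :=
  forall x y z : T, e x y -> e y z -> e x z -> False.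

Definition opnbhd (T : finType) (e : rel T) (v : T) : {set T} := [set u | e v u].
Definition clnbhd (T : finType) (e : rel T) (v : T) : {set T} := v |: opnbhd e v.

Definition min_deg_ge (T : finType) (e : rel T) (k : nat) : Prop :=
  forall v : T, (k <= #|opnbhd e v|)%N.

(* A function V -> {-1,1} is encoded by g : {ffun T -> bool}:
   g v = true means value 1, g v = false means value -1. *)
Definition sgnb (b : bool) : int := if b then 1 else -1.
Definition fval (T : finType) (g : {ffun T -> bool}) (S : {set T}) : int :=
  \sum_(u in S) sgnb (g u).

Definition is_SBF (T : finType) (e : rel T) (g : {ffun T -> bool}) : bool :=
  [forall v, fval g (clnbhd e v) <= 1].
Definition is_BF (T : finType) (e : rel T) (g : {ffun T -> bool}) : bool :=
  [forall v, fval g (opnbhd e v) <= 1].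

(* Maxima of f(V(G)); the seed -#|T| is a lower bound of every f(V(G)),
   so it does not affect the maximum (and is attained by f = -1). *)
Definition beta_s (T : finType) (e : rel T) : int :=
  \big[Num.max/ - (#|T|%:Z)]_(g : {ffun T -> bool} | is_SBF e g) fval g setT.
Definition beta_D (T : finType) (e : rel T) : int :=
  \big[Num.max/ - (#|T|%:Z)]_(g : {ffun T -> bool} | is_BF e g) fval g setT.

(* Vertex set of K_{p,p} o \bar{K_m}:
   inl (s,i) : vertex i of side s of K_{p,p};
   inr ((s,i),j) : j-th vertex of the copy of \bar{K_m} attached to (s,i). *)
Definition base_vx (p : nat) : finType := ('I_2 * 'I_p)%type.
Definition corona_vx (p m : nat) : finType :=
  (base_vx p + (base_vx p * 'I_m))%type.

Definition is_leaf (p m : nat) (x : corona_vx p m) : bool :=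
  if x is inr _ then true else false.

(* Edges prescribed by K_{p,p} o \bar{K_m} for pairs not both in the copies;
   pairs of copy vertices are unconstrained (the "added edges"). *)
Definition corona_compat (p m : nat) (x y : corona_vx p m) (b : bool) : Prop :=
  match x, y with
  | inl a, inl a' => b = (a.1 != a'.1)
  | inl a, inr (a', _) => b = (a == a')
  | inr (a, _), inl a' => b = (a == a')
  | inr _, inr _ => True
  end.

(* G is (isomorphic to) a graph obtained from K_{p,p} o \bar{K_(p+k)}, p >= 1,
   by adding edges between copy vertices, triangle-free, and with
   Delta(G[V \ V(K_{p,p})]) <= d. *)
Definition corona_family (k d : nat) (T : finType) (e : rel T) : Prop :=
  exists p : nat, (0 < p)%N /\
  exists f : T -> corona_vx p (p + k),
    [/\ bijective f,
        (forall x y : T, corona_compat (f x) (f y) (e x y)),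
        triangle_free e &
        (forall x : T, is_leaf (f x) ->
           (#|[set y | e x y && is_leaf (f y)]| <= d)%N)].

Definition in_Lambda (T : finType) (e : rel T) : Prop := corona_family 2 1 e.
Definition in_Omega (T : finType) (e : rel T) : Prop := corona_family 1 2 e.

(* Main.v *)
Require Import Defs.
From HB Require Import structures.
From mathcomp Require Import all_boot all_order all_algebra.
From mathcomp Require Import zify ring lra.
Import Order.TTheory GRing.Theory Num.Theory.
Local Open Scope ring_scope.

Set Implicit Arguments. Unset Strict Implicit.

Local Open Scope ring_scope.

Definition dX (T : finType) (e : rel T) (X : {set T}) (v : T) : nat :=
  #|[set u in X | e v u]|.

Lemma dX_sum (T : finType) (e : rel T) X v :
  dX e X v = (\sum_(u in X) (e v u : nat))%N.
Proof.
rewrite /dX -sum1_card (eq_bigl (fun u => (u \in X) && e v u)); last first.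
  by move=> u; rewrite !inE.
by rewrite big_mkcondr /=; apply: eq_bigr => u _; case: (e v u).
Qed.

Lemma dcount (T : finType) (e : rel T) (X Y : {set T}) : symmetric e ->
  (\sum_(v in X) dX e Y v = \sum_(u in Y) dX e X u)%N.
Proof.
move=> se.
rewrite (eq_bigr (fun v => \sum_(u in Y) (e v u : nat))%N); last by move=> v _; rewrite dX_sum.
rewrite exchange_big /=; apply: eq_bigr => u _; rewrite dX_sum.
by apply: eq_bigr => v _; rewrite se.
Qed.

Lemma sum_eq_le (T : finType) (S : {set T}) (F G : T -> nat) :
  (forall i, i \in S -> F i <= G i)%N ->
  (\sum_(i in S) F i = \sum_(i in S) G i)%N -> forall i, i \in S -> F i = G i.
Proof.
move=> le eq i iS; move: eq.
rewrite (bigD1 i) //= [in X in _ = X -> _](bigD1 i) //=.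
have : (\sum_(j in S | j != i) F j <= \sum_(j in S | j != i) G j)%N.
  by apply: leq_sum => j /andP[jS _]; apply: le.
have := le i iS. lia.
Qed.

Lemma fval_split (T : finType) (g : {ffun T -> bool}) (S : {set T}) :
  fval g S = (#|[set u in S | g u]|)%:Z - (#|[set u in S | ~~ g u]|)%:Z.
Proof.
rewrite /fval (bigID (fun u => g u)) /=.
rewrite (eq_bigr (fun _ => 1)); last by move=> i /andP[_ ->].
rewrite [X in _ + X](eq_bigr (fun _ => -1)); last by move=> i /andP[_ /negbTE ->].
rewrite (eq_bigl (fun u => u \in [set u in S | g u])); last by move=> u; rewrite !inE.
rewrite [X in _ + X](eq_bigl (fun u => u \in [set u in S | ~~ g u])); last by move=> u; rewrite !inE.
by rewrite !sumr_const mulNrn !natz.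
Qed.

Local Open Scope ring_scope.

Local Open Scope nat_scope.
Lemma arith1 a b SA SB : (SA <= SB -> SB <= b*a -> 2*(SA+SB) <= (a+b)^2 /\ (2*(SA+SB) = (a+b)^2 -> [/\ a = b, SA = SB & SB = b*a]))%N.
Proof.
rewrite !expnS expn0 muln1.
have sq: forall a b, 4*(b*a) + (a-b)*(a-b) + (b-a)*(b-a) = (a+b)*(a+b).
  move=> x y; case: (leqP x y) => h.
    have -> : x - y = 0 by lia.
    move: h; rewrite leq_eqVlt => /orP[/eqP->|h]; first by rewrite subnn; lia.
    have [k ->] : exists k, y = x + k by exists (y - x); lia.
    have -> : x + k - x = k by lia. nia.
  have [k ->] : exists k, x = y + k by exists (x - y); lia.
  have -> : y - (y + k) = 0 by lia. have -> : y + k - y = k by lia. nia.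
have key : forall P X Y Q, SA <= SB -> SB <= P -> 4*P + X + Y = Q ->
   2*(SA+SB) <= Q /\ (2*(SA+SB) = Q -> [/\ X = 0, Y = 0, SA = SB & SB = P]).
  move=> P X Y Q r1 r2 r3; split; first lia. move=> r4; split; lia.
move=> h1 h2; have [k1 k2] := key _ _ _ _ h1 h2 (sq a b).
split => // /k2 [/eqP X0 /eqP Y0 -> ->].
rewrite muln_eq0 orbb subn_eq0 in X0; rewrite muln_eq0 orbb subn_eq0 in Y0.
have ab : a = b by apply/eqP; rewrite eqn_leq X0 Y0.
by split.
Qed.

Local Open Scope ring_scope.
Lemma mantel (T : finType) (e : rel T) (M : {set T}) :
  symmetric e -> irreflexive e -> triangle_free e ->
  (2 * \sum_(u in M) dX e M u <= #|M| ^ 2)%N /\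
  ((2 * \sum_(u in M) dX e M u = #|M| ^ 2)%N ->
    exists A : {set T}, [/\ A \subset M, (#|A| * 2 = #|M|)%N &
      forall x y, x \in M -> y \in M -> e x y = ((x \in A) != (y \in A))]).
Proof.
move=> se ie tf.
have [M0|[x0 x0M]] := set_0Vmem M.
  rewrite M0 big_set0 cards0; split => // _; exists set0.
  by split; rewrite ?sub0set ?cards0 // => x y; rewrite inE.
pose x := [arg max_(x > x0 in M) dX e M x].
have [xM xmax] : x \in M /\ forall y, y \in M -> (dX e M y <= dX e M x)%N.
  rewrite /x; case: arg_maxnP => // z zM zmax; split => // y yM; exact: zmax.
pose A := [set u in M | e x u].
pose B := M :\: A.
have AM : A \subset M by apply/subsetP => u; rewrite inE => /andP[].
have Aind : forall y z, y \in A -> z \in A -> e y z = false.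
  move=> y z; rewrite !inE => /andP[_ xy] /andP[_ xz]; apply/negP => yz.
  exact: (tf x y z).
have cardM : #|M| = (#|A| + #|B|)%N.
  by rewrite -(cardsID A M) (setIidPr AM).
have dA : forall u, u \in A -> dX e M u = dX e B u.
  move=> u uA; rewrite /dX; apply: eq_card => w; rewrite !inE.
  case wA: (w \in A); first by rewrite Aind ?andbF.
  by move: wA; rewrite inE => ->; rewrite /=; case: (w \in M).
have SMsplit : (\sum_(u in M) dX e M u = \sum_(u in A) dX e B u + \sum_(u in B) dX e M u)%N.
  rewrite (big_setID A) /= (setIidPr AM); congr (_ + _).
  by apply: eq_bigr => u uA; rewrite dA.
have SAB : (\sum_(u in A) dX e B u = \sum_(u in B) dX e A u)%N by apply: dcount.
have dBle : forall w, w \in B -> (dX e A w <= dX e M w)%N.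
  move=> w _; apply: subset_leq_card; apply/subsetP => u; rewrite !inE.
  by case/andP => /andP[-> _] ->.
have dMle : forall w, w \in B -> (dX e M w <= #|A|)%N.
  move=> w; rewrite inE => /andP[_ wM].
  have -> : #|A| = dX e M x by [].
  exact: xmax.
have S1 : (\sum_(u in B) dX e A u <= \sum_(u in B) dX e M u)%N by apply: leq_sum.
have S2 : (\sum_(u in B) dX e M u <= \sum_(u in B) #|A|)%N by apply: leq_sum.
rewrite sum_nat_const in S2.
set a := #|A| in cardM S2 dMle *; set b := #|B| in cardM S2.
set SA := (\sum_(u in B) dX e A u)%N in S1 SAB.
set SB := (\sum_(u in B) dX e M u)%N in S1 S2 SMsplit.
rewrite SMsplit SAB cardM.
have [k1 k2] := arith1 S1 S2.
split => // /k2 [ab eqAB eqB'].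
have eqB : (SB = \sum_(u in B) a)%N by rewrite sum_nat_const.
have p1 := sum_eq_le dBle eqAB.
have p2 := sum_eq_le dMle eqB.
have Bfull : forall w, w \in B -> forall u, u \in A -> e w u.
  move=> w wB u uA.
  have : [set u in A | e w u] == A.
    rewrite eqEcard; apply/andP; split.
      by apply/subsetP => z; rewrite inE => /andP[].
    have := p1 w wB; have := p2 w wB; rewrite /dX /a => -> ->; done.
  by move/eqP => E; move: uA; rewrite -{1}E inE => /andP[].
have Bonly : forall w, w \in B -> forall u, u \in M -> e w u -> u \in A.
  move=> w wB u uM wu.
  have : [set u in A | e w u] == [set u in M | e w u].
    rewrite eqEcard; apply/andP; split.
      apply/subsetP => z; rewrite [z \in [set _ in A | _]]inE => /andP[zA wz].
      by rewrite inE (subsetP AM z zA) wz.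
    by have := p1 w wB; rewrite /dX => ->.
  move/eqP => E.
  have : u \in [set u in M | e w u] by rewrite inE uM wu.
  by rewrite -E inE => /andP[].
exists A; split => //; first by rewrite -/a -ab; lia.
move=> y z yM zM.
case yA: (y \in A); case zA: (z \in A) => /=.
- exact: Aind.
- by rewrite se; apply: Bfull => //; rewrite inE zA zM.
- by apply: Bfull => //; rewrite inE yA yM.
- apply/negP => yz.
  have yB : y \in B by rewrite inE yA yM.
  by have := Bonly y yB z zM yz; rewrite zA.
Qed.

Local Open Scope ring_scope.

Lemma I2 (s t : 'I_2) : ((val s == 0)%N != (val t == 0)%N) = (s != t).
Proof.
by case: s => [[|[|s]] Hs]; case: t => [[|[|t]] Ht].
Qed.

Lemma card_corona p m : #|corona_vx p m| = (2 * p + 2 * p * m)%N.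
Proof.
by rewrite /corona_vx card_sum /base_vx !card_prod !card_ord.
Qed.

Lemma build (T : finType) (e : rel T) (c : nat) (g : {ffun T -> bool})
  (A : {set T}) (q : nat) :
  simple_graph e -> triangle_free e -> (0 < q)%N ->
  A \subset [set u | ~~ g u] -> #|A| = q -> #|[set u | ~~ g u]| = (2 * q)%N ->
  (forall x y, ~~ g x -> ~~ g y -> e x y = ((x \in A) != (y \in A))) ->
  (forall v, g v -> dX e [set u | ~~ g u] v = 1%N /\ (dX e [set u | g u] v <= 3 - c)%N) ->
  (forall u, ~~ g u -> dX e [set u | g u] u = (q + c)%N) ->
  #|T| = (2 * q + 2 * q * (q + c))%N -> corona_family c (3 - c) e.
Proof.
move=> [se ie] tf q0 AM cA cM adj Pv Mv cT.
set P := [set u | g u] in Pv Mv *.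
set M := [set u | ~~ g u] in AM cM Pv *.
have [x0 _] : exists x0 : T, x0 \in T.
  by apply/card_gt0P; rewrite cT; lia.
pose B := M :\: A.
have cB : #|B| = q by rewrite cardsD (setIidPr AM) cM cA; lia.
pose side (s : 'I_2) : {set T} := if (val s == 0)%N then A else B.
have cside : forall s, #|side s| = q by move=> s; rewrite /side; case: ifP.
pose core (a : base_vx q) : T := nth x0 (enum (side a.1)) a.2.
have core_side : forall a, core a \in side a.1.
  move=> [s i]; rewrite /core /= -mem_enum; apply: mem_nth.
  by rewrite -cardE cside.
have coreM : forall a, ~~ g (core a).
  move=> a; have := core_side a; rewrite /side; case: ifP => _.
    by move/(subsetP AM); rewrite inE.
  by rewrite inE => /andP[_]; rewrite inE.
have coreA : forall a, (core a \in A) = (val a.1 == 0)%N.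
  move=> a; have := core_side a; rewrite /side; case: ifP => _ // .
  by rewrite inE => /andP[/negbTE].
have core_inj : injective core.
  move=> [s i] [t j] E.
  have st : s = t.
    have := I2 s t.
    rewrite -[(val s == 0)%N](coreA (s, i)) -[(val t == 0)%N](coreA (t, j)) E eqxx.
    by move=> /esym/negbFE/eqP.
  subst t; congr (_, _); apply/val_inj/eqP.
  move: E; rewrite /core /= => /eqP; rewrite nth_uniq ?enum_uniq //.
  - by rewrite -cardE cside.
  - by rewrite -cardE cside.
pose L (x : T) : {set T} := [set u in P | e x u].
have cL : forall a, #|L (core a)| = (q + c)%N by move=> a; exact: Mv.
pose h (z : corona_vx q (q + c)) : T :=
  match z with inl a => core a | inr (a, j) => nth x0 (enum (L (core a))) j end.
have hinl : forall a, h (inl a) = core a by [].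
have hinr : forall a j, h (inr (a, j)) = nth x0 (enum (L (core a))) j by [].
have h_inr : forall a j, h (inr (a, j)) \in L (core a).
  move=> a j; rewrite hinr -mem_enum; apply: mem_nth.
  by rewrite -cardE cL.
have hinrP : forall a j, g (h (inr (a, j))) /\ e (core a) (h (inr (a, j))).
  by move=> a j; have := h_inr a j; rewrite !inE => /andP[-> ->].
have uniqM : forall u a b, g u -> e u (core a) -> e u (core b) -> a = b.
  move=> u a b gu ua ub; apply: core_inj.
  have [d1 _] := Pv u gu.
  have : (#|[set w in M | e u w]| <= 1)%N by rewrite -/(dX e M u) d1.
  move/card_le1_eqP; apply; rewrite inE ?ua ?ub andbT inE coreM //.
have adjLC : forall a b j, e (core a) (h (inr (b, j))) = (a == b).
  move=> a b j; case: eqP => [->|ab]; first by have [_ ->] := hinrP b j.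
  apply/negP => E; apply: ab.
  have [gu E2] := hinrP b j.
  by apply: (uniqM _ _ _ gu); rewrite se.
have hinj : injective h.
  move=> [a|[a j]] [b|[b k]].
  - by rewrite !hinl => /core_inj ->.
  - by rewrite hinl => E; have [+ _] := hinrP b k; rewrite -E (negbTE (coreM a)).
  - by rewrite hinl => E; have [+ _] := hinrP a j; rewrite E (negbTE (coreM b)).
  - move=> E.
    have [ga ea] := hinrP a j; have [gb eb] := hinrP b k.
    rewrite E in ga ea.
    have ab : a = b by apply: (uniqM _ _ _ ga); rewrite se.
    subst b; congr (inr (_, _)); apply/val_inj/eqP.
    move: E; rewrite !hinr => /eqP; rewrite nth_uniq ?enum_uniq //.
    - by rewrite -cardE cL.
    - by rewrite -cardE cL.
have hb : bijective h.
  by apply: inj_card_bij hinj _; rewrite card_corona cT.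
case: hb => f hf fh.
have leafg : forall z, is_leaf z = g (h z).
  move=> [a|[a j]]; first by rewrite hinl (negbTE (coreM a)).
  by have [-> _] := hinrP a j.
have K : forall z w, corona_compat z w (e (h z) (h w)).
  move=> [a|[a j]] [b|[b k]].
  - rewrite !hinl /= adj ?coreM // !coreA.
    by case: a => s i; case: b => t l; rewrite /= I2.
  - by rewrite hinl adjLC.
  - by rewrite hinl /= se adjLC eq_sym.
  - done.
exists q; split => //; exists f; split.
- by exists h.
- by move=> x y; have := K (f x) (f y); rewrite !fh.
- done.
- move=> x; rewrite leafg fh => gx.
  have [_ d2] := Pv x gx.
  apply: leq_trans d2; rewrite /dX; apply: subset_leq_card; apply/subsetP => y.
  by rewrite !inE leafg fh andbC.
Qed.

Local Open Scope ring_scope.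

Lemma core (T : finType) (e : rel T) (c : nat) (g : {ffun T -> bool}) :
  simple_graph e -> triangle_free e ->
  (forall v, g v -> (1 <= dX e [set u | ~~ g u] v)%N /\
       (dX e [set u | g u] v + c <= dX e [set u | ~~ g u] v + 2)%N) ->
  (forall v, ~~ g v -> (dX e [set u | g u] v <= dX e [set u | ~~ g u] v + c)%N) ->
  (2 * #|T| <= #|[set u | ~~ g u]| ^ 2 + (2 * c + 2) * #|[set u | ~~ g u]|)%N /\
  ((2 * #|T| = #|[set u | ~~ g u]| ^ 2 + (2 * c + 2) * #|[set u | ~~ g u]|)%N ->
   (0 < #|T|)%N -> corona_family c (3 - c) e).
Proof.
move=> [se ie] tf HP HM.
move Pdef : [set u | g u] => P in HP HM *.
move Mdef : [set u | ~~ g u] => M in HP HM *.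
have inP : forall u, (u \in P) = g u by move=> u; rewrite -Pdef inE.
have inM : forall u, (u \in M) = ~~ g u by move=> u; rewrite -Mdef inE.
have MC : M = ~: P by apply/setP => u; rewrite inE inP inM.
have cT : #|T| = (#|P| + #|M|)%N by rewrite MC cardsC.
have s1 : (\sum_(v in P) 1 <= \sum_(v in P) dX e M v)%N.
  by apply: leq_sum => v; rewrite inP => /HP [].
rewrite sum1_card in s1.
have s2 := dcount P M se.
have s3 : (\sum_(u in M) dX e P u <= \sum_(u in M) (dX e M u + c))%N.
  by apply: leq_sum => u; rewrite inM => /HM.
rewrite big_split /= sum_nat_const in s3.
have [m1 m2] := mantel M se ie tf.
set SM := (\sum_(u in M) dX e M u)%N in s3 m1 m2.
set SP := (\sum_(v in P) dX e M v)%N in s1 s2.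
set SQ := (\sum_(u in M) dX e P u)%N in s2 s3.
set p := #|P| in cT s1 *; set m := #|M| in s3 m1 m2 *.
have E1 : ((2 * c + 2) * m = 2 * (m * c) + 2 * m)%N by ring.
rewrite E1 cT.
move Hmc : (m * c)%N => mc in E1 s3 *.
move Hm2 : (m ^ 2)%N => m2' in m1 m2 *.
split; first lia.
move=> Heq T0.
have eSM : (2 * SM = m2')%N by lia.
have eSP : (\sum_(v in P) 1 = SP)%N by rewrite sum1_card; lia.
have eSQ : (SQ = \sum_(u in M) (dX e M u + c))%N by rewrite big_split /= sum_nat_const; lia.
have [A [AM cA adj]] := m2 eSM.
have le1 : forall v, v \in P -> (1 <= dX e M v)%N by move=> v; rewrite inP => /HP [].
have le2 : forall u, u \in M -> (dX e P u <= dX e M u + c)%N by move=> u; rewrite inM => /HM.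
have pw1 := sum_eq_le le1 eSP.
have pw2 := sum_eq_le le2 eSQ.
set q := #|A| in cA adj.
have dMq : forall u, u \in M -> dX e M u = q.
  move=> u uM; rewrite /dX; case uA: (u \in A).
  - have -> : [set w in M | e u w] = M :\: A.
      apply/setP => w; rewrite !inE; case wM: (w \in M); rewrite ?andbF //=.
      by rewrite adj // uA andbT.
    by rewrite cardsD (setIidPr AM) -/q; lia.
  - have -> : [set w in M | e u w] = A.
      apply/setP => w; rewrite !inE; case wM: (w \in M) => /=.
        by rewrite adj // uA; case: (w \in A).
      by apply/esym/negP => /(subsetP AM); rewrite wM.
    done.
have mq : m = (2 * q)%N by rewrite -cA; lia.
have cTq : #|T| = (2 * q + 2 * q * (q + c))%N.
  rewrite cT; move: Heq; rewrite -Hm2 -Hmc mq; nia.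
have q0 : (0 < q)%N by move: T0 Heq; rewrite -Hm2 -Hmc mq; nia.
apply: (build (g := g) (A := A) (q := q)) => //.
- by rewrite Mdef.
- by rewrite Mdef.
- by move=> x y gx gy; apply: adj; rewrite inM.
- rewrite Mdef Pdef => v gv.
  have := pw1 v; rewrite inP => /(_ gv) <-; split => //.
  by have [_] := HP v gv; rewrite -(pw1 v) ?inP //; lia.
- rewrite Pdef => u gu.
  by rewrite (pw2 u) ?inM // dMq ?inM.
Qed.

Local Open Scope ring_scope.

Lemma real_bound (R : rcfType) (p m k : nat) :
  (2 * (p + m) <= m ^ 2 + 2 * k * m)%N ->
  ((p%:Z - m%:Z)%:~R : R) <=
     (p + m)%N%:R + (2 * k)%N%:R - 2 * Num.sqrt ((k ^ 2)%N%:R + 2 * (p + m)%N%:R) /\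
  (((p%:Z - m%:Z)%:~R : R) =
     (p + m)%N%:R + (2 * k)%N%:R - 2 * Num.sqrt ((k ^ 2)%N%:R + 2 * (p + m)%N%:R) ->
   (2 * (p + m) = m ^ 2 + 2 * k * m)%N).
Proof.
move=> H.
have HR : ((2 * (p + m))%N%:R <= (m ^ 2 + 2 * k * m)%N%:R :> R) by rewrite ler_nat.
rewrite intrB.
change ((p%:Z)%:~R : R) with (p%:R : R); change ((m%:Z)%:~R : R) with (m%:R : R).
rewrite !(natrD, natrM, natrX) in HR *.
set x : R := p%:R in HR *; set y : R := m%:R in HR *; set kk : R := k%:R in HR *.
have x0 : 0 <= x by rewrite /x ler0n.
have y0 : 0 <= y by rewrite /y ler0n.
have k0 : 0 <= kk by rewrite /kk ler0n.
have X0 : 0 <= kk ^+ 2 + 2%:R * (x + y) by nra.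
set s := Num.sqrt _.
have s0 : 0 <= s by apply: sqrtr_ge0.
have ss : s ^+ 2 = kk ^+ 2 + 2%:R * (x + y) by apply: sqr_sqrtr.
have sle : s <= y + kk.
  rewrite -[y + kk]ger0_norm; last by lra.
  rewrite -sqrtr_sqr; apply: ler_wsqrtr; nra.
split; first by rewrite [2%:R]/= ; lra.
move=> E.
have sE : s = y + kk by rewrite [2%:R]/= in E; lra.
have : kk ^+ 2 + 2%:R * (x + y) = (y + kk) ^+ 2 by rewrite -ss sE.
move=> E2.
apply/eqP; rewrite -(eqr_nat R) !(natrD, natrM, natrX) -/x -/y -/kk.
apply/eqP; rewrite [2%:R]/=; nra.
Qed.

Lemma seed_lt (R : rcfType) (n k : nat) : (0 < n)%N -> (0 < k)%N ->
  - (n%:R : R) < n%:R + (2 * k)%N%:R - 2 * Num.sqrt ((k ^ 2)%N%:R + 2 * n%:R).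
Proof.
move=> n0 k0.
rewrite natrM natrX.
have hn : (1 : R) <= n%:R by rewrite ler1n.
have hk : (1 : R) <= k%:R by rewrite ler1n.
set x : R := n%:R in hn *; set kk : R := k%:R in hk *.
have X0 : 0 <= kk ^+ 2 + 2 * x by nra.
set s := Num.sqrt _.
have s0 : 0 <= s by apply: sqrtr_ge0.
have ss : s ^+ 2 = kk ^+ 2 + 2 * x by apply: sqr_sqrtr.
have : s < x + kk by nra.
rewrite [2%:R]/=; lra.
Qed.

Local Open Scope ring_scope.

Lemma bigmax_cases (I : finType) (P : pred I) (F : I -> int) (x0 : int) :
  \big[Num.max/x0]_(i | P i) F i = x0 \/
  exists2 i, P i & \big[Num.max/x0]_(i | P i) F i = F i.
Proof.
apply: (big_ind (fun y => y = x0 \/ exists2 i, P i & y = F i)).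
- by left.
- by move=> x y Hx Hy; case: (leP x y).
- by move=> i Pi; right; exists i.
Qed.

Lemma bigmax_ubR (R : realDomainType) (I : finType) (P : pred I) (F : I -> int) (x0 : int) (B : R) :
  (forall i, P i -> (F i)%:~R <= B) -> x0%:~R <= B ->
  (\big[Num.max/x0]_(i | P i) F i)%:~R <= B.
Proof.
move=> HF H0.
apply: (big_ind (fun y : int => y%:~R <= B)) => //.
by move=> x y Hx Hy; case: (leP x y).
Qed.

Lemma bigmax_lb (I : finType) (P : pred I) (F : I -> int) (x0 : int) i :
  P i -> F i <= \big[Num.max/x0]_(i | P i) F i.
Proof.
by move=> Pi; rewrite (bigD1 i) //= le_max lexx.
Qed.

Lemma fam_good (T : finType) (e : rel T) (c d : nat) :
  simple_graph e -> corona_family c d e ->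
  exists q (g : {ffun T -> bool}), [/\ (0 < q)%N, #|T| = (2 * q + 2 * q * (q + c))%N,
     #|[set u | ~~ g u]| = (2 * q)%N,
     (forall v, g v -> (dX e [set u | g u] v <= d)%N /\ (1 <= dX e [set u | ~~ g u] v)%N) &
     (forall v, ~~ g v -> (dX e [set u | g u] v <= q + c)%N /\ (q <= dX e [set u | ~~ g u] v)%N)].
Proof.
move=> [se ie] [q [q0 [f [fb comp tf leaf]]]].
case: (fb) => h fh hf.
pose g := [ffun x => is_leaf (f x)].
have gE : forall x, g x = is_leaf (f x) by move=> x; rewrite ffunE.
exists q, g; split => //.
- by rewrite -card_corona; apply: bij_eq_card fb.
- have -> : [set u | ~~ g u] = h @: [set z : corona_vx q (q + c) | ~~ is_leaf z].
    apply/setP => u; rewrite inE gE; apply/idP/imsetP.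
      by move=> H; exists (f u); rewrite ?inE ?fh.
    by move=> [z zl ->]; rewrite hf; move: zl; rewrite inE.
  rewrite card_imset; last exact: (can_inj hf).
  have -> : [set z : corona_vx q (q + c) | ~~ is_leaf z] = inl @: [set: base_vx q].
    apply/setP => z; rewrite inE; apply/idP/imsetP.
      by case: z => // a _; exists a.
    by move=> [a _ ->].
  rewrite card_imset; last by move=> a b [].
  by rewrite cardsT /base_vx card_prod !card_ord.
- move=> v; rewrite gE; case Efv: (f v) => [a|[a j]] // _.
  split.
    apply: leq_trans (leaf v _); last by rewrite Efv.
    rewrite /dX; apply: subset_leq_card; apply/subsetP => y.
    by rewrite !inE gE andbC.
  apply/card_gt0P; exists (h (inl a)); rewrite !inE gE hf /=.
  by have := comp v (h (inl a)); rewrite Efv hf /= eqxx => ->.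
- move=> v; rewrite gE; case Efv: (f v) => [a|[a j]] // _.
  split.
    apply: (@leq_trans #|[set h (inr (a, j)) | j : 'I_(q + c)]|).
      apply: subset_leq_card; apply/subsetP => u; rewrite !inE gE => /andP[lu evu].
      apply/imsetP; move: lu evu; case Efu: (f u) => [b|[b k]] // _ evu.
      have := comp v u; rewrite Efv Efu evu /= => /esym/eqP ab; subst b.
      by exists k => //; rewrite -Efu fh.
    by apply: leq_trans (leq_imset_card _ _) _; rewrite card_ord.
  have [o ho] : exists o : 'I_2, o != a.1.
    by case: a.1 => [[|[|?]] ?]; [exists ord_max | exists ord0 | ].
  have <- : #|[set h (inl (o, i)) | i : 'I_q]| = q.
    rewrite card_imset ?card_ord //.
    by move=> i i' /(can_inj hf) [].
  rewrite /dX; apply: subset_leq_card; apply/subsetP => u /imsetP [i _ ->].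
  rewrite !inE gE hf /=.
  by have := comp v (h (inl (o, i))); rewrite Efv hf /= eq_sym ho => ->.
Qed.

Local Open Scope ring_scope.

Lemma part (R : rcfType) (T : finType) (e : rel T) (c : nat) (good : pred {ffun T -> bool}) :
  simple_graph e -> triangle_free e -> (0 < #|T|)%N -> (0 < c)%N ->
  (forall g, good g ->
     (forall v, g v -> (1 <= dX e [set u | ~~ g u] v)%N /\
        (dX e [set u | g u] v + c <= dX e [set u | ~~ g u] v + 2)%N) /\
     (forall v, ~~ g v -> (dX e [set u | g u] v <= dX e [set u | ~~ g u] v + c)%N)) ->
  (forall q (g : {ffun T -> bool}), (0 < q)%N ->
     (forall v, g v -> (dX e [set u | g u] v <= 3 - c)%N /\ (1 <= dX e [set u | ~~ g u] v)%N) ->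
     (forall v, ~~ g v -> (dX e [set u | g u] v <= q + c)%N /\ (q <= dX e [set u | ~~ g u] v)%N) ->
     good g) ->
  let beta := \big[Num.max/ - (#|T|%:Z)]_(g | good g) fval g setT in
  let n : R := #|T|%:R in
  ((beta%:~R : R) <= n + (2 * (c + 1))%N%:R - 2 * Num.sqrt (((c + 1) ^ 2)%N%:R + 2 * n)) /\
  ((beta%:~R : R) = n + (2 * (c + 1))%N%:R - 2 * Num.sqrt (((c + 1) ^ 2)%N%:R + 2 * n)
     <-> corona_family c (3 - c) e).
Proof.
move=> sg tf T0 c0 Hgood Hsuff beta n.
have fvalE : forall g : {ffun T -> bool},
    fval g setT = #|[set u | g u]|%:Z - #|[set u | ~~ g u]|%:Z.
  move=> g; rewrite fval_split.
  have -> : [set u in setT | g u] = [set u | g u] by apply/setP => u; rewrite !inE.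
  by have -> : [set u in setT | ~~ g u] = [set u | ~~ g u] by apply/setP => u; rewrite !inE.
have cardT : forall g : {ffun T -> bool},
    #|T| = (#|[set u | g u]| + #|[set u | ~~ g u]|)%N.
  move=> g; rewrite -(cardsC [set u | g u]); congr (_ + _).
  by apply: eq_card => u; rewrite !inE.
set bound := n + _ - _.
have RB : forall g, good g -> ((fval g setT)%:~R : R) <= bound /\
     ((fval g setT)%:~R = bound -> corona_family c (3 - c) e).
  move=> g gg; have [H1 H2] := Hgood g gg.
  have [k1 k2] := core sg tf H1 H2.
  rewrite (cardT g) in k1 k2.
  have k1' : (2 * (#|[set u | g u]| + #|[set u | ~~ g u]|) <=
       #|[set u | ~~ g u]| ^ 2 + 2 * (c + 1) * #|[set u | ~~ g u]|)%N.
    by move: k1; rewrite (_ : (2 * c + 2) = 2 * (c + 1))%N //; lia.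
  have [r1 r2] := real_bound R k1'.
  rewrite fvalE /bound /n (cardT g); split => // /r2 E.
  apply: k2; last by rewrite -(cardT g).
  by rewrite E; lia.
have seed := seed_lt R T0 (k := (c + 1)%N) (ltac:(lia)).
rewrite -/n -/bound in seed.
have ub : (beta%:~R : R) <= bound.
  apply: bigmax_ubR => [g gg|]; first exact: (RB g gg).1.
  by rewrite mulrNz; apply: ltW.
split => //; split.
- move=> E.
  case: (bigmax_cases good (fun g => fval g setT) (- #|T|%:Z)) => [Eb|[g gg Eb]].
    by move: seed; rewrite -E /beta Eb mulrNz ltxx.
  by apply: (RB g gg).2; rewrite -E /beta Eb.
- move=> fam; have [q [g [q0 cTq cM Hl Hc]]] := fam_good sg fam.
  have gg : good g := Hsuff q g q0 Hl Hc.
  have lb := bigmax_lb (fun g => fval g setT) (- #|T|%:Z) gg.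
  apply/eqP; rewrite eq_le ub /=.
  apply: le_trans (_ : ((fval g setT)%:~R : R) <= _); last by rewrite ler_int.
  have Enat : ((c + 1) ^ 2 + 2 * #|T| = (2 * q + c + 1) ^ 2)%N by rewrite cTq; ring.
  have Es : Num.sqrt (((c + 1) ^ 2)%N%:R + 2 * n) = (2 * q + c + 1)%N%:R.
    rewrite /n -natrM -natrD Enat natrX sqrtr_sqr.
    by rewrite ger0_norm // ler0n.
  rewrite /bound Es fvalE intrB.
  change ((#|[set u | g u]|%:Z)%:~R : R) with (#|[set u | g u]|%:R : R).
  change ((#|[set u | ~~ g u]|%:Z)%:~R : R) with (#|[set u | ~~ g u]|%:R : R).
  rewrite /n (cardT g) cM !(natrD, natrM).
  lra.
Qed.

Unset Implicit Arguments. Set Strict Implicit.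

Local Open Scope ring_scope.

Lemma fvalN (T : finType) (e : rel T) (g : {ffun T -> bool}) v :
  fval g (opnbhd e v) = (dX e [set u | g u] v)%:Z - (dX e [set u | ~~ g u] v)%:Z.
Proof.
rewrite fval_split /dX.
by congr (Posz _ - Posz _); apply: eq_card => u; rewrite !inE andbC.
Qed.

Lemma fvalC (T : finType) (e : rel T) (g : {ffun T -> bool}) v : ~~ e v v ->
  fval g (clnbhd e v) = sgnb (g v) + fval g (opnbhd e v).
Proof.
by move=> nv; rewrite /fval /clnbhd big_setU1 //= inE.
Qed.

Lemma degE (T : finType) (e : rel T) (g : {ffun T -> bool}) v :
  #|opnbhd e v| = (dX e [set u | g u] v + dX e [set u | ~~ g u] v)%N.
Proof.
rewrite -(cardsID [set u | g u] (opnbhd e v)) /dX.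
by congr (_ + _); apply: eq_card => u; rewrite !inE andbC.
Qed.

Theorem theorem2p2 (R : rcfType) (T : finType) (e : rel T) :
  simple_graph e -> triangle_free e -> (0 < #|T|)%N ->
  let n : R := (#|T|)%:R in
  (min_deg_ge e 1 ->
     ((beta_s e)%:~R <= n + 6 - 2 * Num.sqrt (9 + 2 * n)
      /\ ((beta_s e)%:~R = n + 6 - 2 * Num.sqrt (9 + 2 * n) <-> in_Lambda e)))
  /\
  (min_deg_ge e 2 ->
     ((beta_D e)%:~R <= n + 4 - 2 * Num.sqrt (4 + 2 * n)
      /\ ((beta_D e)%:~R = n + 4 - 2 * Num.sqrt (4 + 2 * n) <-> in_Omega e))).
Proof.
move=> sg tf T0 n; have [se ie] := sg.
split => Hd.
- have := @part R T e 2 (is_SBF e) sg tf T0 isT.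
  apply.
  + move=> g /forallP gg; split => v gv.
    * have := gg v; rewrite fvalC ?ie // fvalN gv /=.
      have := Hd v; rewrite (degE _ e g) => d1; lia.
    * have := gg v; rewrite fvalC ?ie // fvalN (negbTE gv) /=; lia.
  + move=> q g q0 Hl Hc; apply/forallP => v.
    rewrite fvalC ?ie // fvalN.
    case gv: (g v) => /=.
      by have := Hl v gv; lia.
    by have := Hc v (negbT gv); lia.
- have := @part R T e 1 (is_BF e) sg tf T0 isT.
  apply.
  + move=> g /forallP gg; split => v gv.
    * have := gg v; rewrite fvalN.
      have := Hd v; rewrite (degE _ e g) => d1; lia.
    * have := gg v; rewrite fvalN; lia.
  + move=> q g q0 Hl Hc; apply/forallP => v.
    rewrite fvalN.
    case gv: (g v).
      by have := Hl v gv; lia.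
    by have := Hc v (negbT gv); lia.
Qed.
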